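(* The representable left $k[\Delta_{a,\mathrm{inj}}]$-modules $P_n:=k[\Delta_{a,\mathrm{inj}}]([n],-)$, $n\ge0$, with differentials $P_n\to P_{n-1}$ given by precomposition with $\sum_{i=0}^n(-1)^i\delta^i$, and with augmentation $\varepsilon\colon P_0\to k_\bullet[0]$ equal to $1$ on basis morphisms in nonnegative degrees and $0$ at $[-1]$, form a projective resolution of $k_\bullet[0]$ in the category of left $k[\Delta_{a,\mathrm{inj}}]$-modules.
   Context: $k$ is a field; $k[\mathcal C]$ is the $k$-linearization of a small category. A left module over a $k$-linear category is a $k$-linear functor to $\mathrm{Vect}_k$. $\Delta_{a,\mathrm{inj}}$ has objects $[n]=\{0<\dots<n\}$, $n\ge0$, and $[-1]=\varnothing$, with injective order-preserving maps as morphisms; $\delta^i\colon[n-1]\to[n]$ ($0\le i\le n$) omits $i$. $k_\bullet[0]$ is the left $k[\Delta_{a,\mathrm{inj}}]$-module with value $k$ at $[n]$ for $n\ge0$ and $0$ at $[-1]$, every morphism between nonnegative objects acting by the identity (it is the left Kan extension of the constant module $k$ on $\Delta_{\mathrm{inj}}$ along the inclusion $\Delta_{\mathrm{inj}}\hookrightarrow\Delta_{a,\mathrm{inj}}$). *)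

(* Defs.v *)
From mathcomp Require Import all_boot all_order all_algebra.
Set Implicit Arguments. Unset Strict Implicit. Unset Printing Implicit Defensive.
Import GRing.Theory.
Local Open Scope ring_scope.

(* Objects of Delta_{a,inj} are encoded by their cardinality N : nat:
   N = n+1 encodes [n] = {0<...<n} (n >= 0), and N = 0 encodes [-1] = empty. *)

(* Injective order-preserving maps 'I_A -> 'I_B (= strictly increasing maps). *)
Definition incr (A B : nat) (f : {ffun 'I_A -> 'I_B}) : bool :=
  [forall i : 'I_A, forall j : 'I_A, (i < j)%N ==> (f i < f j)%N].

Definition Hom (A B : nat) := {f : {ffun 'I_A -> 'I_B} | incr f}.

Section Modules.
Variable k : fieldType.

(* A left k[Delta_{a,inj}]-module: a k-linear functor to Vect_k, given by its
   values on objects and the action of basis morphisms (extended linearly). *)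
Definition is_lmodule (M : nat -> lmodType k)
  (act : forall A B, Hom A B -> M A -> M B) : Prop :=
  [/\ (forall A B (g : Hom A B) (a : k) (x y : M A),
          act A B g (a *: x + y) = a *: act A B g x + act A B g y),
      (forall A (g : Hom A A), (forall i, sval g i = i) -> forall x, act A A g x = x)
    & (forall A B C (f : Hom A B) (g : Hom B C) (h : Hom A C),
          (forall i, sval h i = sval g (sval f i)) ->
          forall x, act A C h x = act B C g (act A B f x))].

Definition is_hom (M N : nat -> lmodType k)
  (actM : forall A B, Hom A B -> M A -> M B)
  (actN : forall A B, Hom A B -> N A -> N B)
  (p : forall A, M A -> N A) : Prop :=
  (forall A (a : k) (x y : M A), p A (a *: x + y) = a *: p A x + p A y) /\
  (forall A B (g : Hom A B) (x : M A), p B (actM A B g x) = actN A B g (p A x)).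

(* Projective object in the category of left modules: morphisms lift along
   epimorphisms (= objectwise surjective morphisms). *)
Definition projective (P : nat -> lmodType k)
  (actP : forall A B, Hom A B -> P A -> P B) : Prop :=
  forall (M N : nat -> lmodType k)
    (actM : forall A B, Hom A B -> M A -> M B)
    (actN : forall A B, Hom A B -> N A -> N B),
  is_lmodule actM -> is_lmodule actN ->
  forall p : forall A, M A -> N A, is_hom actM actN p ->
  (forall A (y : N A), exists x, p A x = y) ->
  forall h : forall A, P A -> N A, is_hom actP actN h ->
  exists l : forall A, P A -> M A,
    is_hom actP actM l /\ forall A (x : P A), p A (l A x) = h A x.

(* The representable module P_n = k[Delta_{a,inj}]([n], -), n >= 0:
   value at the object of cardinality M is the free k-vector space on
   Hom (n+1) M, written as coordinate functions. *)
Definition Pval (n M : nat) : lmodType k := {ffun Hom n.+1 M -> k^o}.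

(* Action by postcomposition, extended linearly. *)
Definition Pact (n : nat) (A B : nat) (g : Hom A B) (v : Pval n A) : Pval n B :=
  [ffun h' : Hom n.+1 B =>
     \sum_(h : Hom n.+1 A | [forall j, sval h' j == sval g (sval h j)]) v h].

(* Differential P_{n+1} -> P_n: precomposition with sum_i (-1)^i delta^i,
   where delta^i : [n] -> [n+1] (cardinalities n+1 -> n+2) omits i,
   i.e. delta^i = lift i. Coordinate formula of the linear extension of
   f |-> sum_i (-1)^i f o delta^i. *)
Definition Pd (n M : nat) (v : Pval n.+1 M) : Pval n M :=
  [ffun h : Hom n.+1 M =>
     \sum_(f : Hom n.+2 M)
       \sum_(i : 'I_n.+2 | [forall j : 'I_n.+1, sval f (lift i j) == sval h j])
         (-1) ^+ i * v f].

(* k_bullet[0]: k (as 'rV_1) at [n], n >= 0, and 0 (as 'rV_0) at [-1];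
   morphisms between nonnegative objects act by the identity. *)
Definition K0val (M : nat) : lmodType k := 'rV[k]_(minn M 1).

Definition K0act (A B : nat) (g : Hom A B) (v : K0val A) : K0val B :=
  \row_(j < minn B 1) \sum_(i < minn A 1) v ord0 i.

Definition Peps (M : nat) (v : Pval 0 M) : K0val M :=
  \row_(j < minn M 1) \sum_(h : Hom 1 M) v h.

End Modules.

Arguments Pval {k} n M.
Arguments Pact {k} n A B g v.
Arguments Pd {k} n M v.
Arguments K0val {k} M.
Arguments K0act {k} A B g v.
Arguments Peps {k} M v.

(* Main.v *)
Require Import Defs.
From mathcomp Require Import all_boot all_order all_algebra zify.
Set Implicit Arguments. Unset Strict Implicit. Unset Printing Implicit Defensive.
Import GRing.Theory.
Local Open Scope ring_scope.
Notation HOM := Defs.Hom.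

Lemma incrP A B (f : {ffun 'I_A -> 'I_B}) : incr f -> forall i j : 'I_A, (i < j)%N -> (f i < f j)%N.
Proof. by move=> /forallP H i j; move: (H i) => /forallP /(_ j) /implyP. Qed.

Lemma incrI A B (f : {ffun 'I_A -> 'I_B}) : (forall i j : 'I_A, (i < j)%N -> (f i < f j)%N) -> incr f.
Proof. by move=> H; apply/forallP => i; apply/forallP => j; apply/implyP; apply: H. Qed.

Lemma homP A B (f g : HOM A B) : (forall x, sval f x = sval g x) -> f = g.
Proof. by move=> H; apply: val_inj; apply/ffunP. Qed.

Lemma hom_mono A B (f : HOM A B) (i j : 'I_A) : (i <= j)%N -> (sval f i <= sval f j)%N.
Proof.
rewrite leq_eqVlt => /orP [/eqP E|H].
  by have -> : i = j by apply: val_inj.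
by apply: ltnW; apply: incrP (svalP f) _ _ H.
Qed.

Lemma comp_incr A B C (g : HOM B C) (f : HOM A B) : incr [ffun x => sval g (sval f x)].
Proof. by apply: incrI => i j H; rewrite !ffunE; apply: (incrP (svalP g)); apply: (incrP (svalP f)). Qed.

Definition comp A B C (g : HOM B C) (f : HOM A B) : HOM A C := exist (@incr _ _) _ (comp_incr g f).

Lemma compE A B C (g : HOM B C) (f : HOM A B) x : sval (comp g f) x = sval g (sval f x).
Proof. by rewrite /= ffunE. Qed.

Lemma bump_mono i x y : (x < y)%N -> (bump i x < bump i y)%N.
Proof. rewrite /bump; case: (leqP i x); case: (leqP i y) => /=; lia. Qed.

Lemma delta_incr n (i : 'I_n.+2) : incr [ffun x : 'I_n.+1 => lift i x].
Proof. by apply: incrI => x y H; rewrite !ffunE /=; apply: bump_mono. Qed.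

Definition delta n (i : 'I_n.+2) : HOM n.+1 n.+2 := exist (@incr _ _) _ (delta_incr i).

Lemma deltaE n (i : 'I_n.+2) x : sval (delta i) x = lift i x.
Proof. by rewrite /= ffunE. Qed.

Lemma zero_incr M : incr [ffun x : 'I_1 => (ord0 : 'I_M.+1)].
Proof. by apply: incrI => i j; rewrite !ord1. Qed.
Definition zhom M : HOM 1 M.+1 := exist (@incr _ _) _ (zero_incr M).

Section Lin.
Variable k : fieldType.

Lemma scaleo (a b : k) : a *: (b : k^o) = a * b. Proof. by []. Qed.

Definition islin (V W : lmodType k) (phi : V -> W) :=
  forall a x y, phi (a *: x + y) = a *: phi x + phi y.

Section IsLin.
Variables (V W : lmodType k) (phi : V -> W) (H : islin phi).
Lemma islin0 : phi 0 = 0.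
Proof. by have := H (-1) 0 0; rewrite scaler0 addr0 scaleN1r addNr. Qed.
Lemma islinD x y : phi (x + y) = phi x + phi y.
Proof. by have := H 1 x y; rewrite !scale1r. Qed.
Lemma islinZ a x : phi (a *: x) = a *: phi x.
Proof. by have := H a x 0; rewrite !addr0 islin0 addr0. Qed.
Lemma islin_sum I (r : seq I) (P : pred I) (F : I -> V) :
  phi (\sum_(i <- r | P i) F i) = \sum_(i <- r | P i) phi (F i).
Proof. exact: (big_morph phi islinD islin0). Qed.
Lemma islinB x y : phi (x - y) = phi x - phi y.
Proof. by have := H (-1) y x; rewrite scaleN1r addrC => ->; rewrite scaleN1r addrC. Qed.
End IsLin.

Definition lin A B (V : lmodType k) (T : HOM A B -> V) (v : {ffun HOM A B -> k^o}) : V :=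
  \sum_f v f *: T f.

Definition e A B (f : HOM A B) : {ffun HOM A B -> k^o} := [ffun g => (g == f)%:R].

Lemma lin_islin A B (V : lmodType k) (T : HOM A B -> V) : islin (lin T).
Proof.
move=> a x y; rewrite /lin scaler_sumr -big_split /=; apply: eq_bigr => f _.
by rewrite !ffunE scalerDl scaleo scalerA.
Qed.

Lemma lin_e A B (V : lmodType k) (T : HOM A B -> V) f : lin T (e f) = T f.
Proof.
rewrite /lin (bigD1 f) //= ffunE eqxx scale1r big1 ?addr0 // => g /negbTE ne.
by rewrite ffunE ne scale0r.
Qed.

Lemma expand A B (v : {ffun HOM A B -> k^o}) : lin (@e A B) v = v.
Proof.
apply/ffunP => h; rewrite sum_ffunE (bigD1 h) //= !ffunE eqxx scaleo mulr1.
rewrite big1 ?addr0 // => g /negbTE ne; by rewrite !ffunE eq_sym ne scaleo mulr0.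
Qed.

Lemma islin_lin A B (V W : lmodType k) (phi : V -> W) (T : HOM A B -> V) v :
  islin phi -> phi (lin T v) = lin (fun f => phi (T f)) v.
Proof.
move=> H; rewrite /lin (islin_sum H); apply: eq_bigr => f _; exact: islinZ.
Qed.

Lemma eq_lin A B (V : lmodType k) (T1 T2 : HOM A B -> V) v :
  (forall f, T1 f = T2 f) -> lin T1 v = lin T2 v.
Proof. by move=> H; apply: eq_bigr => f _; rewrite H. Qed.

Lemma lin0 A B (V : lmodType k) v : lin (fun _ : HOM A B => (0 : V)) v = 0.
Proof. by apply: big1 => f _; rewrite scaler0. Qed.

Lemma linB A B (V : lmodType k) (T1 T2 : HOM A B -> V) v :
  lin (fun f => T1 f - T2 f) v = lin T1 v - lin T2 v.
Proof. by rewrite /lin -sumrB; apply: eq_bigr => f _; rewrite scalerBr. Qed.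

Lemma lin_const A B (V : lmodType k) (x : V) v :
  lin (fun _ : HOM A B => x) v = (\sum_f v f) *: x.
Proof. by rewrite /lin scaler_suml. Qed.

End Lin.

Section Reps.
Variable k : fieldType.
Local Notation e := (@e k).
Local Notation lin := (@lin k).

Lemma condPact n A B (g : HOM A B) (h : HOM n.+1 A) (h' : HOM n.+1 B) :
  [forall j, sval h' j == sval g (sval h j)] = (comp g h == h').
Proof.
apply/forallP/eqP => [H|<- j]; last by rewrite compE.
by apply: homP => x; rewrite compE; apply/esym/eqP.
Qed.

Lemma PactE n A B (g : HOM A B) (v : Pval n A) :
  Pact n A B g v = lin (fun f => e (comp g f)) v.
Proof.
apply/ffunP => h'; rewrite ffunE sum_ffunE big_mkcond /=; apply: eq_bigr => h _.
rewrite !ffunE condPact scaleo eq_sym; case: eqP => _; by rewrite ?mulr1 ?mulr0.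
Qed.

Definition De n M (f : HOM n.+2 M) : Pval n M :=
  \sum_(i < n.+2) (-1) ^+ i *: e (comp f (delta i)).

Lemma condPd n M (f : HOM n.+2 M) (i : 'I_n.+2) (h : HOM n.+1 M) :
  [forall j : 'I_n.+1, sval f (lift i j) == sval h j] = (comp f (delta i) == h).
Proof.
apply/forallP/eqP => [H|<- j]; last by rewrite compE deltaE.
by apply: homP => x; rewrite compE deltaE; apply/eqP.
Qed.

Lemma PdE n M (v : Pval n.+1 M) : Pd n M v = lin (@De n M) v.
Proof.
apply/ffunP => h; rewrite ffunE sum_ffunE; apply: eq_bigr => f _.
rewrite ffunE sum_ffunE scaleo mulr_sumr big_mkcond /=; apply: eq_bigr => i _.
rewrite condPd !ffunE scaleo eq_sym; case: eqP => _; by rewrite ?mulr1 ?mulr0 // mulrC.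
Qed.

Lemma PepsE M (v : Pval 0 M) : Peps M v = lin (fun _ => \row_j 1) v.
Proof. by rewrite lin_const; apply/rowP => j; rewrite !mxE mulr1. Qed.

End Reps.

Section Mods.
Variable k : fieldType.

Lemma Pact_lmod n : is_lmodule (@Pact k n).
Proof.
split.
- by move=> A B g a x y; rewrite !PactE; apply: lin_islin.
- move=> A g H x; rewrite PactE -[RHS]expand; apply: eq_lin => f; congr (e _).
  by apply: homP => y; rewrite compE H.
- move=> A B C f g h H x; rewrite !PactE (islin_lin _ _ (lin_islin _)).
  apply: eq_lin => f'; rewrite lin_e; congr (e _).
  by apply: homP => y; rewrite !compE H.
Qed.

Lemma sumK0 A (x : @K0val k A) : A = 0%N -> \sum_(i < minn A 1) x ord0 i = 0.
Proof. by move=> EA; subst A; rewrite big_ord0. Qed.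

Lemma sumK1 A (x : @K0val k A.+1) : \sum_(i < minn A.+1 1) x ord0 i = x ord0 ord0.
Proof. by rewrite big_ord1. Qed.

Lemma K0_lmod : is_lmodule (@K0act k).
Proof.
split.
- move=> A B g a x y; apply/rowP => j; rewrite !mxE; rewrite mulr_sumr -big_split /=.
  by apply: eq_bigr => i _; rewrite !mxE.
- move=> [|A] g H x; apply/rowP => j; rewrite !mxE.
    by have : (j < 0)%N := ltn_ord j.
  have Hj : (j < 1)%N := ltn_ord j.
  rewrite sumK1; congr (x _ _); apply: val_inj; by case: j Hj => [[|m]].
- move=> A B C f g h H x; apply/rowP => j; rewrite !mxE.
  move: f g H; case: B => [|B] f g H.
    move: f h H x; case: A => [|A] f h H x; last by case: (sval f ord0).
    by rewrite !sumK0.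
  by rewrite sumK1 mxE.
Qed.
End Mods.

Section Homs.
Variable k : fieldType.

Lemma Pd_hom n : is_hom (@Pact k n.+1) (@Pact k n) (@Pd k n).
Proof.
split; first by move=> A a x y; rewrite !PdE; apply: lin_islin.
move=> A B g x; rewrite !PdE !PactE !(islin_lin _ _ (lin_islin _)).
apply: eq_lin => f; rewrite lin_e /De (islin_sum (lin_islin _)).
apply: eq_bigr => i _; rewrite (islinZ (lin_islin _)) lin_e; congr (_ *: e k _).
by apply: homP => y; rewrite !compE.
Qed.

Lemma Peps_hom : is_hom (@Pact k 0) (@K0act k) (@Peps k).
Proof.
split; first by move=> A a x y; rewrite !PepsE; apply: lin_islin.
move=> A B g x; rewrite PactE [LHS]PepsE (islin_lin _ _ (lin_islin _)).
rewrite (eq_lin _ (T2 := fun _ => \row_j 1)); last by move=> f; rewrite lin_e.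
rewrite lin_const; apply/rowP => j; rewrite !mxE mulr1.
move: g x; case: A => [|A] g x.
  rewrite sumK0 // big1 // => h _; by case: (sval h ord0).
by rewrite sumK1 mxE.
Qed.
End Homs.

Lemma id_incr A : incr [ffun x : 'I_A => x].
Proof. by apply: incrI => i j; rewrite !ffunE. Qed.
Definition idhom A : HOM A A := exist (@incr _ _) _ (id_incr A).

Section Proj.
Variable k : fieldType.

Lemma P_proj n : projective (@Pact k n).
Proof.
move=> M N actM actN [HMl HMid HMc] HN p [plin pnat] psurj h [hlin hnat].
have [x Hx] := psurj n.+1 (h n.+1 (e k (idhom n.+1))).
exists (fun A v => lin (fun f => actM n.+1 A f x) v).
split; first split.
- by move=> A a u w; apply: lin_islin.
- move=> A B g v; rewrite PactE (islin_lin _ _ (lin_islin _)) (islin_lin _ _ (HMl A B g)).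
  apply: eq_lin => f; rewrite lin_e; apply: HMc => i; exact: compE.
- move=> A v; rewrite (islin_lin _ _ (plin A)) -[in RHS](expand v).
  rewrite (islin_lin _ _ (hlin A)); apply: eq_lin => f.
  rewrite pnat Hx -hnat PactE lin_e; congr (h A (e k _)).
  by apply: homP => y; rewrite compE /= ffunE.
Qed.
End Proj.

Lemma tri (V : zmodType) N (F : nat -> nat -> V) :
  (forall i j, (i <= j < N)%N -> F j.+1 i = - F i j) ->
  \sum_(i < N.+1) \sum_(j < N) F i j = 0.
Proof.
elim: N => [|N IH] H; first by apply: big1 => i _; rewrite big_ord0.
rewrite big_ord_recr /=.
under eq_bigr do rewrite big_ord_recr /=.
rewrite big_split /= IH; last by move=> i j /andP [h1 h2]; apply: H; rewrite h1 /= ltnW.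
rewrite add0r -big_split big1 // => i _ /=; rewrite H; first by rewrite addrN.
have := ltn_ord i; lia.
Qed.

Lemma bumpC i j y : (i <= j)%N -> bump j.+1 (bump i y) = bump i (bump j y).
Proof. rewrite /bump => hij; repeat (case: leqP => ?); lia. Qed.

Section DD.
Variable k : fieldType.


Lemma lin_De n M (V : lmodType k) (T : HOM n.+1 M -> V) (f : HOM n.+2 M) :
  lin T (De k f) = \sum_(i < n.+2) (-1) ^+ i *: T (comp f (delta i)).
Proof.
rewrite /De (islin_sum (lin_islin _)); apply: eq_bigr => i _.
by rewrite (islinZ (lin_islin _)) lin_e.
Qed.

Lemma dd n M (v : @Pval k n.+2 M) : Pd n M (Pd n.+1 M v) = 0.
Proof.
rewrite !PdE (islin_lin _ _ (lin_islin _)) -[RHS](@lin0 k _ _ _ v); apply: eq_lin => f.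
rewrite lin_De.
pose G (i j : nat) := ((-1) ^+ (i + j) : k) *:
   e k (comp (comp f (delta (inord i))) (delta (inord j))).
rewrite -[RHS](@tri _ n.+2 G).
  apply: eq_bigr => i _; rewrite /De scaler_sumr; apply: eq_bigr => j _.
  by rewrite scalerA -exprD /G !inord_val.
move=> i j /andP [hij hj]; rewrite /G addSn exprS addnC mulN1r scaleNr; congr (- (_ *: _)).
congr (e k _); apply: homP => y; rewrite !compE !deltaE; congr (sval f _).
apply: val_inj; rewrite /= !inordK //; try lia.
exact: bumpC.
Qed.

Lemma epsd M (v : @Pval k 1 M) : Peps M (Pd 0 M v) = 0.
Proof.
rewrite PdE PepsE (islin_lin _ _ (lin_islin _)) -[RHS](@lin0 k _ _ _ v); apply: eq_lin => f.
rewrite lin_De big_ord_recl big_ord1 /= expr0 expr1 scale1r scaleN1r addrN //.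
Qed.
End DD.

Definition cone_ff m M (f : HOM m.+1 M.+1) : {ffun 'I_m.+2 -> 'I_M.+1} :=
  [ffun j => if unlift ord0 j is Some j' then sval f j' else ord0].

Lemma cone0 m M (f : HOM m.+1 M.+1) : cone_ff f ord0 = ord0.
Proof. by rewrite ffunE unlift_none. Qed.

Lemma coneS m M (f : HOM m.+1 M.+1) x : cone_ff f (lift ord0 x) = sval f x.
Proof. by rewrite ffunE liftK. Qed.

Lemma cone_incr m M (f : HOM m.+1 M.+1) : (0 < sval f ord0)%N -> incr (cone_ff f).
Proof.
move=> H0; apply: incrI => i j.
case: (unliftP ord0 i) => [i'|] ->; case: (unliftP ord0 j) => [j'|] ->.
- by rewrite !coneS !lift0 ltnS; apply: incrP (svalP f) _ _.
- by rewrite lift0.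
- by rewrite cone0 coneS => _; apply: leq_trans H0 (hom_mono _ _).
- by rewrite ltnn.
Qed.

Lemma cone_not m M (f : HOM m.+1 M.+1) : sval f ord0 = ord0 -> incr (cone_ff f) = false.
Proof.
move=> Hf; apply/negbTE/negP => H.
have := incrP H (i := ord0) (j := lift ord0 ord0).
by move=> /(_ isT); rewrite cone0 coneS Hf ltnn.
Qed.

Lemma lift_lift0 n (i : 'I_n.+1) (y : 'I_n) :
  lift (lift ord0 i) (lift ord0 y) = lift ord0 (lift i y).
Proof. apply: val_inj; rewrite /= /bump; repeat (case: leqP => ?); lia. Qed.

Lemma lift_lift00 n (i : 'I_n.+1) :
  lift (lift ord0 i) (ord0 : 'I_n.+1) = ord0.
Proof. by apply: val_inj; rewrite /= /bump. Qed.

Section Htpy.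
Variable k : fieldType.

Definition s m M (f : HOM m.+1 M.+1) : @Pval k m.+1 M.+1 :=
  if (insub (cone_ff f) : option (HOM m.+2 M.+1)) is Some c then e k c else 0.

Lemma sT m M (f : HOM m.+1 M.+1) (H : (0 < sval f ord0)%N) :
  s f = e k (exist (@incr _ _) (cone_ff f) (cone_incr H)).
Proof.
rewrite /s; case: insubP => [c _ Ec|]; last by rewrite (cone_incr H).
by congr (e k _); apply: val_inj. Qed.

Lemma sF m M (f : HOM m.+1 M.+1) : sval f ord0 = ord0 -> s f = 0.
Proof. by move=> H; rewrite /s insubF // cone_not. Qed.


Lemma linD A B (V : lmodType k) (T1 T2 : HOM A B -> V) v :
  lin (fun f => T1 f + T2 f) v = lin T1 v + lin T2 v.
Proof. by rewrite /lin -big_split; apply: eq_bigr => f _; rewrite scalerDr. Qed.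

Lemma comp_cone0 m M (f : HOM m.+1 M.+1) (H : (0 < sval f ord0)%N) :
  comp (exist (@incr _ _) (cone_ff f) (cone_incr H)) (delta ord0) = f.
Proof. by apply: homP => y; rewrite compE deltaE /= coneS. Qed.

Lemma htpy_basis m M (f : HOM m.+2 M.+1) :
  lin (@De k m.+1 M.+1) (s f) + lin (@s m M) (De k f) = e k f.
Proof.
rewrite lin_De.
have [H0|H0] := posnP (sval f ord0).
  have Hf : sval f ord0 = ord0 by apply: val_inj.
  rewrite (sF Hf) islin0 ?add0r; last exact: lin_islin.
  rewrite big_ord_recl big1 ?addr0.
    have Hp : (0 < sval (comp f (delta ord0)) ord0)%N.
      have h := @incrP _ _ _ (svalP f) ord0 (lift ord0 ord0) isT; rewrite H0 in h; by rewrite compE deltaE.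
    rewrite (sT Hp) expr0 scale1r; congr (e k _); apply: homP => y.
    case: (unliftP ord0 y) => [y'|] -> /=; first by rewrite coneS compE deltaE.
    by rewrite cone0 Hf.
  move=> i _; rewrite sF ?scaler0 //.
  by rewrite compE deltaE lift_lift00.
rewrite (sT H0) lin_e /De big_ord_recl comp_cone0 expr0 scale1r -addrA.
rewrite -[RHS]addr0; congr (_ + _); rewrite -big_split big1 //= => i _.
have Hp : (0 < sval (comp f (delta i)) ord0)%N.
  by rewrite compE deltaE; apply: (leq_trans H0); exact: hom_mono.
rewrite (sT Hp) /bump leq0n add1n exprS mulN1r scaleNr addrC; apply/eqP; rewrite subr_eq0; apply/eqP.
congr (_ *: e k _); apply: homP => y.
case: (unliftP ord0 y) => [y'|] -> /=; rewrite !ffunE.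
  by rewrite lift_lift0 !liftK compE deltaE.
by rewrite lift_lift00 !unlift_none.
Qed.

Lemma htpy m M (v : @Pval k m.+1 M.+1) :
  Pd m.+1 M.+1 (lin (@s m.+1 M) v) + lin (@s m M) (Pd m M.+1 v) = v.
Proof.
rewrite !PdE !(islin_lin _ _ (lin_islin _)) -linD -[RHS]expand.
apply: eq_lin => f; exact: htpy_basis.
Qed.


Lemma htpy0 M (v : @Pval k 0 M.+1) :
  Pd 0 M.+1 (lin (@s 0 M) v) = v - (\sum_h v h) *: e k (zhom M).
Proof.
have -> : v - (\sum_h v h) *: e k (zhom M) = lin (fun f => e k f - e k (zhom M)) v.
  by rewrite linB lin_const expand.
rewrite PdE (islin_lin _ _ (lin_islin _)); apply: eq_lin => f.
have [H0|H0] := posnP (sval f ord0).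
  have Hf : sval f ord0 = ord0 by apply: val_inj.
  rewrite (sF Hf) islin0; last exact: lin_islin.
  have -> : f = zhom M by apply: homP => y; rewrite ord1 Hf /= ffunE.
  by rewrite subrr.
rewrite (sT H0) lin_e /De big_ord_recl big_ord1 comp_cone0 expr0 scale1r /bump /=.
rewrite expr1 scaleN1r; congr (_ - e k _); apply: homP => y.
rewrite compE deltaE /= !ffunE /= (ord1 y) lift_lift00 unlift_none /=; done.
Qed.

Lemma Pval0 n (v w : @Pval k n 0) : v = w.
Proof. by apply/ffunP => h; case: (sval h ord0). Qed.

End Htpy.

Theorem lemma3p6 (k : fieldType) :
  (forall n : nat, is_lmodule (@Pact k n)) /\
  is_lmodule (@K0act k) /\
  (forall n : nat, is_hom (@Pact k n.+1) (@Pact k n) (@Pd k n)) /\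
  is_hom (@Pact k 0) (@K0act k) (@Peps k) /\
  (forall n : nat, projective (@Pact k n)) /\
  (forall n M (v : @Pval k n.+2 M), Pd n M (Pd n.+1 M v) = 0) /\
  (forall M (v : @Pval k 1 M), Peps M (Pd 0 M v) = 0) /\
  (forall M (y : @K0val k M), exists v : @Pval k 0 M, Peps M v = y) /\
  (forall M (v : @Pval k 0 M), Peps M v = 0 ->
     exists w : @Pval k 1 M, Pd 0 M w = v) /\
  (forall n M (v : @Pval k n.+1 M), Pd n M v = 0 ->
     exists w : @Pval k n.+2 M, Pd n.+1 M w = v).
Proof.
split; first exact: Pact_lmod.
split; first exact: K0_lmod.
split; first exact: Pd_hom.
split; first exact: Peps_hom.
split; first exact: P_proj.
split; first exact: dd.
split; first exact: epsd.
split.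
  move=> [|M] y.
    by exists 0; apply/rowP => j; have : (j < 0)%N := ltn_ord j.
  exists ((y ord0 ord0) *: e k (zhom M)).
  rewrite PepsE (islinZ (lin_islin _)) lin_e; apply/rowP => j; rewrite !mxE mulr1.
  have Hj : (j < 1)%N := ltn_ord j.
  by congr (y _ _); apply: val_inj; case: j Hj => [[|m]].
split.
  move=> [|M] v Hv; first by exists 0; apply: Pval0.
  exists (lin (@s k 0 M) v); rewrite htpy0.
  have := congr1 (fun r : 'rV[k]_1 => r ord0 ord0) Hv; rewrite /= !mxE => ->.
  by rewrite scale0r subr0.
move=> n [|M] v Hv; first by exists 0; apply: Pval0.
exists (lin (@s k n.+1 M) v); have := htpy v; rewrite Hv.
by rewrite islin0 ?addr0 //; exact: lin_islin.
Qed.
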